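(* Let $\gamma$ be a positive integer and let $$G=\Bigl\langle a,b\,\Bigm|\, a^{2^{\gamma+1}}=b^{2^{\gamma+1}}=[a,b]^{2^{\gamma}}=[a,b,a]=[a,b,b]=e,\ a^{2^{\gamma}}=b^{2^{\gamma}}=[a,b]^{2^{\gamma-1}}\Bigr\rangle.$$ Then $G$ is not capable.
   Context: A group $G$ is called capable if there exists a group $K$ such that $K/Z(K)\cong G$. Commutators are $[x,y]=x^{-1}y^{-1}xy$, left-normed: $[x,y,z]=[[x,y],z]$. *)

(* Defs.v *)
(* abstract (possibly infinite) groups, since capability
   quantifies over arbitrary groups K. *)
From Stdlib Require Import Arith.

Record group : Type := Group {
  carrier :> Type;
  gmul : carrier -> carrier -> carrier;
  ginv : carrier -> carrier;
  gone : carrier;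
  gmulA : forall x y z, gmul x (gmul y z) = gmul (gmul x y) z;
  gmul1l : forall x, gmul gone x = x;
  gmul1r : forall x, gmul x gone = x;
  gmulVl : forall x, gmul (ginv x) x = gone;
  gmulVr : forall x, gmul x (ginv x) = gone
}.

Arguments gmul {g}.
Arguments ginv {g}.
Arguments gone {g}.

Fixpoint gpow {G : group} (x : G) (n : nat) : G :=
  match n with
  | O => gone
  | S m => gmul x (gpow x m)
  end.

Definition comm {G : group} (x y : G) : G :=
  gmul (gmul (gmul (ginv x) (ginv y)) x) y.

Definition is_hom {G H : group} (f : G -> H) : Prop :=
  forall x y : G, f (gmul x y) = gmul (f x) (f y).

Definition central {K : group} (k : K) : Prop :=
  forall x : K, gmul k x = gmul x k.

(* G is capable: there is a group K with K/Z(K) isomorphic to G, i.e. a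
   surjective homomorphism K -> G whose kernel is exactly Z(K). *)
Definition capable (G : group) : Prop :=
  exists (K : group) (f : K -> G),
    is_hom f /\ (forall g : G, exists k : K, f k = g) /\
    (forall k : K, f k = gone <-> central k).

Definition rels (gam : nat) {H : group} (x y : H) : Prop :=
  gpow x (2 ^ (gam + 1)) = gone /\
  gpow y (2 ^ (gam + 1)) = gone /\
  gpow (comm x y) (2 ^ gam) = gone /\
  comm (comm x y) x = gone /\
  comm (comm x y) y = gone /\
  gpow x (2 ^ gam) = gpow y (2 ^ gam) /\
  gpow y (2 ^ gam) = gpow (comm x y) (2 ^ (gam - 1)).

Definition generates {G : group} (a b : G) : Prop :=
  forall P : G -> Prop,
    P gone -> P a -> P b ->
    (forall x y, P x -> P y -> P (gmul x y)) ->
    (forall x, P x -> P (ginv x)) ->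
    forall g, P g.

(* (G, a, b) is the group presented by <a, b | rels gam>: a, b generate G,
   satisfy the relations, and G has the universal property of the
   presentation (together with generation, the induced hom is unique). *)
Definition presents (gam : nat) (G : group) (a b : G) : Prop :=
  generates a b /\ rels gam a b /\
  forall (H : group) (x y : H), rels gam x y ->
    exists f : G -> H, is_hom f /\ f a = x /\ f b = y.

(* Main.v *)
Require Import Defs.
From Stdlib Require Import Arith ZArith Lia ProofIrrelevance.

Lemma cancel_l (G : group) (a b c : G) : gmul a b = gmul a c -> b = c.
Proof.
  intros H. rewrite <- (gmul1l G b), <- (gmul1l G c), <- (gmulVl G a), <- !gmulA, H.
  reflexivity.
Qed.

Lemma inv_uniq (G : group) (u v : G) : gmul u v = gone -> u = ginv v.
Proof.
  intros H. rewrite <- (gmul1r G u), <- (gmulVr G v), gmulA, H, gmul1l. reflexivity.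
Qed.

Lemma hom_one (G H : group) (f : G -> H) : is_hom f -> f gone = gone.
Proof.
  intros hf. apply (cancel_l H (f gone)). rewrite <- hf, !gmul1r. reflexivity.
Qed.

Lemma hom_inv (G H : group) (f : G -> H) : is_hom f -> forall x, f (ginv x) = ginv (f x).
Proof.
  intros hf x. apply inv_uniq. rewrite <- hf, gmulVl. apply hom_one; auto.
Qed.

Lemma hom_pow (G H : group) (f : G -> H) : is_hom f -> forall x m, f (gpow x m) = gpow (f x) m.
Proof.
  intros hf x m; induction m; simpl. apply hom_one; auto. rewrite hf, IHm; reflexivity.
Qed.

Definition cm {G : group} (X k : G) := gmul X k = gmul k X.

Lemma cm_mul (G : group) (X a b : G) : cm X a -> cm X b -> cm X (gmul a b).
Proof. unfold cm; intros Ha Hb. rewrite gmulA, Ha, <- gmulA, Hb, gmulA. reflexivity. Qed.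

Lemma cm_inv (G : group) (X k : G) : cm X (ginv k) -> cm X k.
Proof.
  unfold cm; intros H. symmetry.
  assert (E: gmul k X = gmul k (gmul (gmul X (ginv k)) k))
    by (rewrite <- !gmulA, gmulVl, gmul1r; reflexivity).
  rewrite E, H, !gmulA, gmulVr, gmul1l. reflexivity.
Qed.

Lemma cm_pow (G : group) (x : G) m : cm (gpow x m) x.
Proof.
  unfold cm; induction m; simpl. rewrite gmul1l, gmul1r; reflexivity.
  rewrite <- gmulA, IHm. reflexivity.
Qed.

Open Scope Z_scope.
Definition T3 := (Z * Z * Z)%type.
Definition heis (p q : T3) : T3 :=
  let '(i,j,k) := p in let '(i',j',k') := q in (i+i', j+j', k+k'+i*j').
Definition hinv (p : T3) : T3 := let '(i,j,k) := p in (-i, -j, -k + i*j).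
Definition nrm (h : Z) (p : T3) : T3 :=
  let '(i,j,k) := p in
  (i mod (2*h), j mod (2*h), (k + (i/(2*h) + j/(2*h))*h) mod (2*h)).
Definition R (h : Z) (p q : T3) : Prop :=
  let '(i,j,k) := p in let '(i',j',k') := q in
  exists P Q T, i' = i + P*(2*h) /\ j' = j + Q*(2*h) /\ k' = k - (P+Q)*h + T*(2*h).

Lemma R_refl h p : R h p p.
Proof. destruct p as [[i j] k]; exists 0, 0, 0; repeat split; ring. Qed.

Lemma R_sym h p q : R h p q -> R h q p.
Proof.
  destruct p as [[i j] k], q as [[i' j'] k']; intros [P [Q [T [E1 [E2 E3]]]]].
  exists (-P), (-Q), (-T); subst; repeat split; ring.
Qed.

Lemma R_trans h p q r : R h p q -> R h q r -> R h p r.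
Proof.
  destruct p as [[i j] k], q as [[i' j'] k'], r as [[i'' j''] k''];
  intros [P [Q [T [E1 [E2 E3]]]]] [P' [Q' [T' [F1 [F2 F3]]]]].
  exists (P+P'), (Q+Q'), (T+T'); subst; repeat split; ring.
Qed.

Lemma R_heis h p p' q q' : R h p p' -> R h q q' -> R h (heis p q) (heis p' q').
Proof.
  destruct p as [[i j] k], p' as [[i1 j1] k1], q as [[i' j'] k'], q' as [[i2 j2] k2];
  intros [P [Q [T [E1 [E2 E3]]]]] [P' [Q' [T' [F1 [F2 F3]]]]].
  exists (P+P'), (Q+Q'), (T+T'+i*Q'+P*j'+P*Q'*(2*h)); subst; simpl; repeat split; ring.
Qed.

Lemma R_hinv h p p' : R h p p' -> R h (hinv p) (hinv p').
Proof.
  destruct p as [[i j] k], p' as [[i1 j1] k1];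
  intros [P [Q [T [E1 [E2 E3]]]]].
  exists (-P), (-Q), (-T + i*Q + P*j + P*Q*(2*h)); subst; simpl; repeat split; ring.
Qed.

Lemma R_nrm h (hh : 0 < h) p : R h p (nrm h p).
Proof.
  destruct p as [[i j] k]; unfold nrm, R.
  exists (-(i/(2*h))), (-(j/(2*h))), (-((k + (i/(2*h) + j/(2*h))*h)/(2*h))).
  assert (hn : 2*h <> 0) by lia.
  rewrite (Z.mod_eq i), (Z.mod_eq j), (Z.mod_eq (k + _)) by exact hn. repeat split; ring.
Qed.

Lemma nrm_R h (hh : 0 < h) p q : R h p q -> nrm h p = nrm h q.
Proof.
  destruct p as [[i j] k], q as [[i' j'] k']; intros [P [Q [T [E1 [E2 E3]]]]].
  subst; unfold nrm.
  assert (hn : 2*h <> 0) by lia.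
  rewrite (Z_mod_plus_full i), (Z_mod_plus_full j), (Z.div_add i), (Z.div_add j) by exact hn.
  f_equal.
  replace (k - (P + Q) * h + T * (2 * h) + (i / (2 * h) + P + (j / (2 * h) + Q)) * h)
    with (k + (i / (2 * h) + j / (2 * h)) * h + T * (2*h)) by ring.
  symmetry; apply Z_mod_plus_full.
Qed.

Lemma nrm_idem h (hh : 0 < h) p : nrm h (nrm h p) = nrm h p.
Proof. symmetry; apply nrm_R; auto; apply R_nrm; auto. Qed.

Definition M (h : Z) := {p : T3 | nrm h p = p}.
Definition mk h hh p : M h := exist _ (nrm h p) (nrm_idem h hh p).
Definition Mmul h hh (a b : M h) : M h := mk h hh (heis (proj1_sig a) (proj1_sig b)).
Definition Minv h hh (a : M h) : M h := mk h hh (hinv (proj1_sig a)).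
Definition Mone h hh : M h := mk h hh (0,0,0).

Lemma M_eq h (hh : 0 < h) (a b : M h) : R h (proj1_sig a) (proj1_sig b) -> a = b.
Proof.
  destruct a as [a Ha], b as [b Hb]; simpl; intros HR.
  assert (a = b) by (rewrite <- Ha, <- Hb; apply nrm_R; auto).
  subst. f_equal. apply proof_irrelevance.
Qed.

Lemma mk_R h hh p : R h (proj1_sig (mk h hh p)) p.
Proof. simpl. apply R_sym, R_nrm; auto. Qed.

Lemma Rmul h hh a b p q : R h (proj1_sig a) p -> R h (proj1_sig b) q ->
  R h (proj1_sig (Mmul h hh a b)) (heis p q).
Proof. intros. eapply R_trans. apply mk_R. apply R_heis; auto. Qed.

Lemma Rinv h hh a p : R h (proj1_sig a) p -> R h (proj1_sig (Minv h hh a)) (hinv p).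
Proof. intros. eapply R_trans. apply mk_R. apply R_hinv; auto. Qed.

Lemma heis_assoc p q r : heis p (heis q r) = heis (heis p q) r.
Proof. destruct p as [[i j] k], q as [[i' j'] k'], r as [[i'' j''] k'']; simpl; apply pair_equal_spec; split; [apply pair_equal_spec; split|]; ring. Qed.

Lemma heis0l p : heis (0,0,0) p = p.
Proof. destruct p as [[i j] k]; simpl; apply pair_equal_spec; split; [apply pair_equal_spec; split|]; ring. Qed.
Lemma heis0r p : heis p (0,0,0) = p.
Proof. destruct p as [[i j] k]; simpl; apply pair_equal_spec; split; [apply pair_equal_spec; split|]; ring. Qed.
Lemma heisVl p : heis (hinv p) p = (0,0,0).
Proof. destruct p as [[i j] k]; simpl; apply pair_equal_spec; split; [apply pair_equal_spec; split|]; ring. Qed.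
Lemma heisVr p : heis p (hinv p) = (0,0,0).
Proof. destruct p as [[i j] k]; simpl; apply pair_equal_spec; split; [apply pair_equal_spec; split|]; ring. Qed.

Definition Mgroup (h : Z) (hh : 0 < h) : group.
Proof.
  refine (@Group (M h) (Mmul h hh) (Minv h hh) (Mone h hh) _ _ _ _ _).
  - intros x y z; apply M_eq; auto.
    eapply R_trans. apply Rmul. apply R_refl. apply Rmul; apply R_refl.
    rewrite heis_assoc. apply R_sym. apply Rmul. apply Rmul; apply R_refl. apply R_refl.
  - intros x; apply M_eq; auto.
    eapply R_trans. apply Rmul. apply mk_R. apply R_refl. rewrite heis0l. apply R_refl.
  - intros x; apply M_eq; auto.
    eapply R_trans. apply Rmul. apply R_refl. apply mk_R. rewrite heis0r. apply R_refl.
  - intros x; apply M_eq; auto.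
    eapply R_trans. apply Rmul. apply Rinv. apply R_refl. apply R_refl. rewrite heisVl.
    apply R_sym, mk_R.
  - intros x; apply M_eq; auto.
    eapply R_trans. apply Rmul. apply R_refl. apply Rinv. apply R_refl. rewrite heisVr.
    apply R_sym, mk_R.
Defined.

Fixpoint hpow (p : T3) (m : nat) : T3 :=
  match m with O => (0,0,0) | S m' => heis p (hpow p m') end.

Definition hcomm (p q : T3) : T3 := heis (heis (heis (hinv p) (hinv q)) p) q.

Lemma Rpow h hh (g : Mgroup h hh) p m :
  R h (proj1_sig g) p -> R h (proj1_sig (gpow g m)) (hpow p m).
Proof.
  intros Hg; induction m.
  - exact (mk_R h hh (0,0,0)).
  - exact (Rmul h hh _ _ _ _ Hg IHm).
Qed.

Lemma Rcomm h hh (a b : Mgroup h hh) p q :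
  R h (proj1_sig a) p -> R h (proj1_sig b) q -> R h (proj1_sig (comm a b)) (hcomm p q).
Proof.
  intros Ha Hb.
  exact (Rmul h hh _ _ _ _ (Rmul h hh _ _ _ _ (Rmul h hh _ _ _ _ (Rinv h hh _ _ Ha) (Rinv h hh _ _ Hb)) Ha) Hb).
Qed.

Lemma M_eq2 h hh (a b : Mgroup h hh) p q :
  R h (proj1_sig a) p -> R h (proj1_sig b) q -> R h p q -> a = b.
Proof.
  intros Ha Hb Hpq. apply (M_eq h hh). eapply R_trans. exact Ha.
  eapply R_trans. exact Hpq. apply R_sym; exact Hb.
Qed.

Lemma hpowS p m : hpow p (S m) = heis p (hpow p m).
Proof. reflexivity. Qed.
Lemma heis_eq a b c d e f : heis (a,b,c) (d,e,f) = (a+d, b+e, c+f+a*e).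
Proof. reflexivity. Qed.

Lemma hpow_x m : hpow (1,0,0) m = (Z.of_nat m, 0, 0).
Proof.
  induction m. reflexivity. rewrite hpowS, IHm, Nat2Z.inj_succ, heis_eq. apply pair_equal_spec; split; [apply pair_equal_spec; split|]; ring.
Qed.
Lemma hpow_y m : hpow (0,1,0) m = (0, Z.of_nat m, 0).
Proof.
  induction m. reflexivity. rewrite hpowS, IHm, Nat2Z.inj_succ, heis_eq. apply pair_equal_spec; split; [apply pair_equal_spec; split|]; ring.
Qed.
Lemma hpow_c m : hpow (0,0,1) m = (0, 0, Z.of_nat m).
Proof.
  induction m. reflexivity. rewrite hpowS, IHm, Nat2Z.inj_succ, heis_eq. apply pair_equal_spec; split; [apply pair_equal_spec; split|]; ring.
Qed.

Lemma model g (hh : 0 < Z.of_nat (2^g)) :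
  rels (S g) (mk _ hh (1,0,0) : Mgroup _ hh) (mk _ hh (0,1,0)) /\
  gpow (mk _ hh (1,0,0) : Mgroup _ hh) (2^(S g)) <> gone.
Proof.
  set (h := Z.of_nat (2^g)) in *.
  assert (E1 : Z.of_nat (2^(S g + 1)) = 4*h).
  { replace (S g + 1)%nat with (S (S g)) by lia. unfold h.
    change (2^(S (S g)))%nat with (2*(2*2^g))%nat. lia. }
  assert (E2 : Z.of_nat (2^(S g)) = 2*h).
  { unfold h. change (2^(S g))%nat with (2*2^g)%nat. lia. }
  replace (S g - 1)%nat with g by lia.
  assert (Hx : R h (proj1_sig (mk h hh (1,0,0) : Mgroup h hh)) (1,0,0)) by apply mk_R.
  assert (Hy : R h (proj1_sig (mk h hh (0,1,0) : Mgroup h hh)) (0,1,0)) by apply mk_R.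
  assert (Hc : R h (proj1_sig (comm (mk h hh (1,0,0) : Mgroup h hh) (mk h hh (0,1,0)))) (0,0,1)).
  { assert (X := Rcomm h hh _ _ _ _ Hx Hy). exact X. }
  assert (H1 : R h (proj1_sig (gone : Mgroup h hh)) (0,0,0)) by apply mk_R.
  split.
  - unfold rels. repeat split.
    + eapply M_eq2. apply Rpow; exact Hx. exact H1.
      rewrite hpow_x, E1. exists (-2), 0, (-1). repeat split; ring.
    + eapply M_eq2. apply Rpow; exact Hy. exact H1.
      rewrite hpow_y, E1. exists 0, (-2), (-1). repeat split; ring.
    + eapply M_eq2. apply Rpow; exact Hc. exact H1.
      rewrite hpow_c, E2. exists 0, 0, (-1). repeat split; ring.
    + eapply M_eq2. apply Rcomm; [exact Hc | exact Hx]. exact H1.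
      apply R_refl.
    + eapply M_eq2. apply Rcomm; [exact Hc | exact Hy]. exact H1.
      apply R_refl.
    + eapply M_eq2. apply Rpow; exact Hx. apply Rpow; exact Hy.
      rewrite hpow_x, hpow_y, E2. exists (-1), 1, 0. repeat split; ring.
    + eapply M_eq2. apply Rpow; exact Hy. apply Rpow; exact Hc.
      rewrite hpow_y, hpow_c, E2. replace (S g - 1)%nat with g by lia. fold h. exists 0, (-1), 0. repeat split; ring.
  - intros Heq.
    assert (Hp := Rpow h hh _ _ (2^(S g)) Hx).
    rewrite Heq, hpow_x, E2 in Hp.
    assert (HR : R h (2*h,0,0) (0,0,0)).
    { eapply R_trans. apply R_sym. exact Hp. exact H1. }
    clearbody h. destruct HR as [P [Q [T [F1 [F2 F3]]]]].
    assert (EP : (P + 1) * (2*h) = 0) by lia.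
    apply Z.mul_eq_0 in EP. destruct EP as [EP|EP]; [|lia].
    assert (EQ : Q * (2*h) = 0) by lia.
    apply Z.mul_eq_0 in EQ. destruct EQ as [EQ|EQ]; [|lia].
    assert (P = -1) by lia. subst P Q.
    assert (ET : h * (1 + 2*T) = 0) by lia.
    apply Z.mul_eq_0 in ET. lia.
Qed.

Close Scope Z_scope.

Lemma inv_inv (G : group) (k : G) : ginv (ginv k) = k.
Proof. symmetry. apply inv_uniq. apply gmulVr. Qed.

Theorem theorem4p1 (gam : nat) (hgam : 0 < gam) (G : group) (a b : G)
  (hG : presents gam G a b) : ~ capable G.
Proof.
  destruct hG as [Hgen [Hrels Huniv]].
  intros [K [f [hf [hsurj hker]]]].
  destruct gam as [|g]; [lia|].
  destruct Hrels as [_ [_ [_ [_ [_ [Hab _]]]]]].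
  set (n := 2 ^ S g) in *.
  destruct (hsurj a) as [x hx]. destruct (hsurj b) as [y hy].
  set (X := gpow x n).
  assert (hfX : f X = gpow a n) by (unfold X; rewrite (hom_pow K G f hf), hx; reflexivity).
  set (z := gmul X (ginv (gpow y n))).
  assert (hz : central z).
  { apply hker. unfold z. rewrite hf, (hom_inv K G f hf), (hom_pow K G f hf), hy, hfX, Hab.
    apply gmulVr. }
  assert (EX : X = gmul z (gpow y n)).
  { unfold z. rewrite <- gmulA, gmulVl, gmul1r. reflexivity. }
  assert (cmx : cm X x) by apply cm_pow.
  assert (cmy : cm X y).
  { unfold cm. rewrite EX, <- gmulA, (cm_pow K y n), gmulA, (hz y), <- gmulA. reflexivity. }
  assert (H0 : forall k k0, cm X k0 -> f k = f k0 -> cm X k).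
  { intros k k0 Hk0 Hf.
    assert (Ek : k = gmul k0 (gmul (ginv k0) k)) by (rewrite gmulA, gmulVr, gmul1l; reflexivity).
    rewrite Ek. apply cm_mul; auto.
    assert (hc : central (gmul (ginv k0) k)).
    { apply hker. rewrite hf, (hom_inv K G f hf), Hf. apply gmulVl. }
    unfold cm. symmetry. apply hc. }
  assert (Hall : forall g0 : G, forall k, f k = g0 -> cm X k).
  { apply (Hgen (fun g0 => forall k, f k = g0 -> cm X k)).
    - intros k hk. apply (H0 k gone). unfold cm; rewrite gmul1l, gmul1r; reflexivity.
      rewrite hk. symmetry. apply hom_one; auto.
    - intros k hk. apply (H0 k x); auto. rewrite hk, hx. reflexivity.
    - intros k hk. apply (H0 k y); auto. rewrite hk, hy. reflexivity.
    - intros g1 g2 P1 P2 k hk.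
      destruct (hsurj g1) as [k1 hk1]. destruct (hsurj g2) as [k2 hk2].
      apply (H0 k (gmul k1 k2)). apply cm_mul; auto.
      rewrite hf, hk1, hk2. auto.
    - intros g1 P1 k hk.
      destruct (hsurj g1) as [k1 hk1].
      apply (H0 k (ginv k1)). apply cm_inv. rewrite inv_inv. auto.
      rewrite (hom_inv K G f hf), hk1. auto. }
  assert (HX : central X).
  { intros k. exact (Hall (f k) k eq_refl). }
  apply hker in HX. rewrite hfX in HX.
  assert (hh : (0 < Z.of_nat (2 ^ g))%Z).
  { assert (2 ^ g <> 0) by (apply Nat.pow_nonzero; lia). lia. }
  destruct (model g hh) as [Hr Hnt].
  destruct (Huniv _ _ _ Hr) as [phi [hphi [hpa _]]].
  apply Hnt. rewrite <- hpa, <- (hom_pow G _ phi hphi).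
  unfold n in HX. rewrite HX. apply hom_one; auto.
Qed.
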